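(* Given $a,b\in\ell_\infty$, there is a continuous symmetric bilinear form $B$ on $\ell_1$ such that for every $z_1\in\ell_1''$ and every $z_2\in c_0^\perp\subseteq\ell_1''$, $$\tilde B(z_1,z_2)=z_1(a)\,z_2(b).$$
   Context: $\ell_1''=\ell_\infty'$, and $c_0^\perp\subseteq\ell_1''$ is the annihilator of $c_0\subseteq\ell_\infty$; one has $\ell_1''=\ell_1\oplus c_0^\perp$. For a continuous bilinear form $B$ on $\ell_1$, its canonical (Aron–Berner) extension is $\tilde B(z_1,z_2)=\lim_{\alpha}\lim_{\beta}B(x_\alpha,y_\beta)$, where $(x_\alpha),(y_\beta)\subseteq\ell_1$ are nets weak-star converging to $z_1$ and $z_2$ respectively (the limit in the second variable taken first). *)

(* Defs.v *)
From Stdlib Require Import Reals.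
From Coquelicot Require Import Coquelicot.
Open Scope R_scope.

Definition is_l1 (x : nat -> R) : Prop := ex_series (fun n => Rabs (x n)).
Definition is_linf (a : nat -> R) : Prop := exists M, forall n, Rabs (a n) <= M.
Definition is_c0 (a : nat -> R) : Prop := is_lim_seq a 0.

Definition norm1 (x : nat -> R) : R := Series (fun n => Rabs (x n)).

Definition pair (x a : nat -> R) : R := Series (fun n => x n * a n).

(* Elements of l1'' = (l_infinity)': continuous linear functionals on l_infinity
   (represented as functions on nat -> R; only their values on l_infinity matter). *)
Definition is_bidual (z : (nat -> R) -> R) : Prop :=
  (forall a b, is_linf a -> is_linf b -> z (fun n => a n + b n) = z a + z b) /\
  (forall c a, is_linf a -> z (fun n => c * a n) = c * z a) /\
  (exists C, forall a M, (forall n, Rabs (a n) <= M) -> Rabs (z a) <= C * M).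

Definition in_c0_perp (z : (nat -> R) -> R) : Prop :=
  is_bidual z /\ forall a, is_c0 a -> z a = 0.

Definition cont_sym_bilinear (B : (nat -> R) -> (nat -> R) -> R) : Prop :=
  (forall x1 x2 y, is_l1 x1 -> is_l1 x2 -> is_l1 y ->
     B (fun n => x1 n + x2 n) y = B x1 y + B x2 y) /\
  (forall c x y, is_l1 x -> is_l1 y -> B (fun n => c * x n) y = c * B x y) /\
  (forall x y1 y2, is_l1 x -> is_l1 y1 -> is_l1 y2 ->
     B x (fun n => y1 n + y2 n) = B x y1 + B x y2) /\
  (forall c x y, is_l1 x -> is_l1 y -> B x (fun n => c * y n) = c * B x y) /\
  (forall x y, is_l1 x -> is_l1 y -> B x y = B y x) /\
  (exists C, forall x y, is_l1 x -> is_l1 y -> Rabs (B x y) <= C * norm1 x * norm1 y).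

Definition directed {I : Type} (le : I -> I -> Prop) : Prop :=
  inhabited I /\
  (forall i, le i i) /\
  (forall i j k, le i j -> le j k -> le i k) /\
  (forall i j, exists k, le i k /\ le j k).

Definition net_lim {I : Type} (le : I -> I -> Prop) (f : I -> R) (l : R) : Prop :=
  forall eps, 0 < eps -> exists i0, forall i, le i0 i -> Rabs (f i - l) < eps.

(* a net in l1 converging weak-star (i.e. sigma(l1'', l_infinity)) to z in l1'' *)
Definition net_wstar {I : Type} (le : I -> I -> Prop) (x : I -> nat -> R)
  (z : (nat -> R) -> R) : Prop :=
  (forall i, is_l1 (x i)) /\
  forall a, is_linf a -> net_lim le (fun i => pair (x i) a) (z a).

(* Aron-Berner extension: AB_ext B z1 z2 v  means  ~B(z1,z2) = v, i.e. for all
   nets x_alpha ->w* z1, y_beta ->w* z2 in l1, lim_alpha lim_beta B(x_alpha,y_beta)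
   exists and equals v (inner limit in the second variable taken first). *)
Definition AB_ext (B : (nat -> R) -> (nat -> R) -> R)
  (z1 z2 : (nat -> R) -> R) (v : R) : Prop :=
  forall (I J : Type) (leI : I -> I -> Prop) (leJ : J -> J -> Prop)
    (x : I -> nat -> R) (y : J -> nat -> R),
    directed leI -> directed leJ -> net_wstar leI x z1 -> net_wstar leJ y z2 ->
    exists g : I -> R,
      (forall i, net_lim leJ (fun j => B (x i) (y j)) (g i)) /\ net_lim leI g v.

(* Main.v *)
Require Import Defs.
From Stdlib Require Import Reals Lra FunctionalExtensionality.
From Coquelicot Require Import Coquelicot.
Open Scope R_scope.

Lemma psS (u : nat -> R) n : sum_n u (S n) = sum_n u n + u (S n).
Proof. rewrite sum_Sn. reflexivity. Qed.
Lemma ps0 (u : nat -> R) : sum_n u 0 = u 0%nat.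
Proof. rewrite sum_O. reflexivity. Qed.

Lemma ps_abs (u : nat -> R) n : Rabs (sum_n u n) <= sum_n (fun k => Rabs (u k)) n.
Proof.
  induction n. rewrite !ps0; lra.
  rewrite !psS. eapply Rle_trans. apply Rabs_triang. lra.
Qed.

Lemma l1_ex (u : nat -> R) : is_l1 u -> ex_series u.
Proof. intro H. apply ex_series_Rabs. exact H. Qed.

Lemma ps_lim (u : nat -> R) : is_l1 u -> is_lim_seq (sum_n u) (Series u).
Proof. intro H. apply (Series_correct u (l1_ex u H)). Qed.

Lemma ps_le_norm1 u n : is_l1 u -> sum_n (fun k => Rabs (u k)) n <= norm1 u.
Proof.
  intro H. unfold norm1. apply is_lim_seq_incr_compare.
  apply (Series_correct _ H). intro m. rewrite psS. pose proof (Rabs_pos (u (S m))). lra.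
Qed.

Lemma norm1_ge0 u : is_l1 u -> 0 <= norm1 u.
Proof.
  intro H. eapply Rle_trans. 2: apply (ps_le_norm1 u 0 H). rewrite ps0. apply Rabs_pos.
Qed.

Lemma ps_bound u n : is_l1 u -> Rabs (sum_n u n) <= norm1 u.
Proof. intro H. eapply Rle_trans. apply ps_abs. apply ps_le_norm1, H. Qed.

Lemma series_bound u : is_l1 u -> Rabs (Series u) <= norm1 u.
Proof. intro H. apply Series_Rabs, H. Qed.

Lemma tail_bound u n : is_l1 u -> Rabs (Series u - sum_n u n) <= 2 * norm1 u.
Proof.
  intro H. pose proof (ps_bound u n H). pose proof (series_bound u H).
  eapply Rle_trans. apply Rabs_triang. rewrite Rabs_Ropp. lra.
Qed.

Lemma l1_mul (u c : nat -> R) M : is_l1 u -> (forall n, Rabs (c n) <= M) ->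
  is_l1 (fun n => u n * c n).
Proof.
  intros H Hc. unfold is_l1.
  apply (@ex_series_le R_AbsRing R_CompleteNormedModule (fun n => Rabs (u n * c n)) (fun n => Rabs (u n) * M)).
  intro n. change (Rabs (Rabs (u n * c n)) <= Rabs (u n) * M).
  rewrite Rabs_Rabsolu, Rabs_mult. apply Rmult_le_compat_l. apply Rabs_pos. apply Hc.
  apply ex_series_scal_r. exact H.
Qed.

Lemma norm1_mul (u c : nat -> R) M : is_l1 u -> (forall n, Rabs (c n) <= M) ->
  norm1 (fun n => u n * c n) <= M * norm1 u.
Proof.
  intros H Hc. unfold norm1. rewrite Rmult_comm, <- Series_scal_r.
  apply Series_le. intro n. split. apply Rabs_pos.
  rewrite Rabs_mult. apply Rmult_le_compat_l. apply Rabs_pos. apply Hc.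
  apply ex_series_scal_r. exact H.
Qed.

Lemma l1_plus u v : is_l1 u -> is_l1 v -> is_l1 (fun n => u n + v n).
Proof.
  intros Hu Hv. unfold is_l1.
  apply (@ex_series_le R_AbsRing R_CompleteNormedModule (fun n => Rabs (u n + v n)) (fun n => Rabs (u n) + Rabs (v n))).
  intro n. change (Rabs (Rabs (u n + v n)) <= Rabs (u n) + Rabs (v n)).
  rewrite Rabs_Rabsolu. apply Rabs_triang.
  apply (ex_series_plus (fun n => Rabs (u n)) (fun n => Rabs (v n)) Hu Hv).
Qed.

Lemma l1_scal c u : is_l1 u -> is_l1 (fun n => c * u n).
Proof.
  intros Hu. unfold is_l1.
  apply (@ex_series_le R_AbsRing R_CompleteNormedModule (fun n => Rabs (c * u n)) (fun n => Rabs (u n) * Rabs c)).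
  intro n. change (Rabs (Rabs (c * u n)) <= Rabs (u n) * Rabs c).
  rewrite Rabs_Rabsolu, Rabs_mult. lra.
  apply ex_series_scal_r. exact Hu.
Qed.

Lemma abel_fin (u v : nat -> R) (SV : R) N :
  sum_n (fun n => v n * sum_n u n) N =
  sum_n (fun n => u n * (SV - sum_n v n)) N - sum_n u N * (SV - sum_n v N)
  + sum_n (fun n => u n * v n) N.
Proof.
  induction N. rewrite !ps0. match goal with |- ?a = ?b => change (@eq R a b) end. ring.
  rewrite !psS. rewrite IHN. match goal with |- ?a = ?b => change (@eq R a b) end. ring.
Qed.

Lemma abel (u v : nat -> R) : is_l1 u -> is_l1 v ->
  Series (fun n => v n * sum_n u n) =
  Series (fun n => u n * (Series v - sum_n v n)) + Series (fun n => u n * v n).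
Proof.
  intros Hu Hv.
  assert (E1 : is_l1 (fun n => u n * (Series v - sum_n v n))).
  { apply l1_mul with (M := 2 * norm1 v). exact Hu. intro n; apply tail_bound, Hv. }
  assert (E2 : is_l1 (fun n => u n * v n)).
  { apply l1_mul with (M := norm1 v). exact Hu. intro n.
    eapply Rle_trans. 2: apply (ps_le_norm1 v n Hv).
    destruct n. rewrite ps0; lra. rewrite psS. pose proof (ps_le_norm1 v n Hv).
    assert (0 <= sum_n (fun k => Rabs (v k)) n).
    { eapply Rle_trans. apply Rabs_pos. apply ps_abs. } lra. }
  apply is_series_unique.
  assert (L : is_lim_seq (fun N => sum_n (fun n => u n * (Series v - sum_n v n)) N
     - sum_n u N * (Series v - sum_n v N) + sum_n (fun n => u n * v n) N)
     (Series (fun n => u n * (Series v - sum_n v n)) - Series u * 0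
       + Series (fun n => u n * v n))).
  { apply is_lim_seq_plus'. apply is_lim_seq_minus'. apply ps_lim, E1.
    apply is_lim_seq_mult'. apply ps_lim, Hu.
    replace 0 with (Series v - Series v) by ring.
    apply is_lim_seq_minus'. apply is_lim_seq_const. apply ps_lim, Hv.
    apply ps_lim, E2. }
  replace (Series (fun n => u n * (Series v - sum_n v n)) + Series (fun n => u n * v n))
    with (Series (fun n => u n * (Series v - sum_n v n)) - Series u * 0
       + Series (fun n => u n * v n)) by ring.
  assert (L' : is_lim_seq (sum_n (fun n => v n * sum_n u n))
     (Series (fun n => u n * (Series v - sum_n v n)) - Series u * 0
       + Series (fun n => u n * v n))).
  { eapply is_lim_seq_ext. 2: exact L. intro N. symmetry. apply abel_fin. }
  exact L'.
Qed.

Definition kx (a b x : nat -> R) (n : nat) : R :=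
  b n * sum_n (fun m => x m * a m) n +
  a n * (Series (fun m => x m * b m) - sum_n (fun m => x m * b m) n).

Definition Bf (a b x y : nat -> R) : R := pair y (kx a b x).

Lemma M_ge0 (a : nat -> R) M : (forall n, Rabs (a n) <= M) -> 0 <= M.
Proof. intro H. eapply Rle_trans. apply Rabs_pos. apply (H 0%nat). Qed.

Lemma kx_bound a b x Ma Mb : is_l1 x -> (forall n, Rabs (a n) <= Ma) ->
  (forall n, Rabs (b n) <= Mb) -> forall n, Rabs (kx a b x n) <= 3 * Ma * Mb * norm1 x.
Proof.
  intros Hx Ha Hb n. unfold kx.
  pose proof (M_ge0 _ _ Ha). pose proof (M_ge0 _ _ Hb). pose proof (norm1_ge0 _ Hx).
  assert (Hxa : is_l1 (fun m => x m * a m)) by (eapply l1_mul; eauto).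
  assert (Hxb : is_l1 (fun m => x m * b m)) by (eapply l1_mul; eauto).
  pose proof (norm1_mul x a Ma Hx Ha). pose proof (norm1_mul x b Mb Hx Hb).
  pose proof (ps_bound _ n Hxa). pose proof (tail_bound _ n Hxb).
  eapply Rle_trans. apply Rabs_triang. rewrite !Rabs_mult.
  assert (A1 : Rabs (b n) * Rabs (sum_n (fun m => x m * a m) n) <= Mb * (Ma * norm1 x)).
  { apply Rmult_le_compat; try apply Rabs_pos; auto. lra. }
  assert (A2 : Rabs (a n) * Rabs (Series (fun m => x m * b m) - sum_n (fun m => x m * b m) n)
     <= Ma * (2 * (Mb * norm1 x))).
  { apply Rmult_le_compat; try apply Rabs_pos; auto. lra. }
  lra.
Qed.

Lemma sym_form a b x y Ma Mb : is_l1 x -> is_l1 y -> (forall n, Rabs (a n) <= Ma) ->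
  (forall n, Rabs (b n) <= Mb) ->
  Bf a b x y =
  Series (fun n => (x n * a n) * (Series (fun m => y m * b m) - sum_n (fun m => y m * b m) n))
  + Series (fun n => (x n * a n) * (y n * b n))
  + Series (fun n => (y n * a n) * (Series (fun m => x m * b m) - sum_n (fun m => x m * b m) n)).
Proof.
  intros Hx Hy Ha Hb.
  assert (Hxa : is_l1 (fun m => x m * a m)) by (eapply l1_mul; eauto).
  assert (Hxb : is_l1 (fun m => x m * b m)) by (eapply l1_mul; eauto).
  assert (Hya : is_l1 (fun m => y m * a m)) by (eapply l1_mul; eauto).
  assert (Hyb : is_l1 (fun m => y m * b m)) by (eapply l1_mul; eauto).
  unfold Bf, pair, kx.
  rewrite (Series_ext _ (fun n => (y n * b n) * sum_n (fun m => x m * a m) n +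
     (y n * a n) * (Series (fun m => x m * b m) - sum_n (fun m => x m * b m) n)))
    by (intro; ring).
  rewrite Series_plus.
  2: { apply l1_ex. eapply l1_mul. exact Hyb. intro n. apply ps_bound, Hxa. }
  2: { apply l1_ex. eapply l1_mul. exact Hya. intro n. apply tail_bound, Hxb. }
  pose proof (abel _ _ Hxa Hyb) as E. cbv beta in E. rewrite E. ring.
Qed.

Lemma Bf_sym a b x y Ma Mb : is_l1 x -> is_l1 y -> (forall n, Rabs (a n) <= Ma) ->
  (forall n, Rabs (b n) <= Mb) -> Bf a b x y = Bf a b y x.
Proof.
  intros Hx Hy Ha Hb.
  rewrite (sym_form a b x y Ma Mb), (sym_form a b y x Ma Mb); auto.
  rewrite (Series_ext (fun n => (x n * a n) * (y n * b n)) (fun n => (y n * a n) * (x n * b n)))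
    by (intro; ring).
  ring.
Qed.

Lemma pair_plus y1 y2 k M : is_l1 y1 -> is_l1 y2 -> (forall n, Rabs (k n) <= M) ->
  pair (fun n => y1 n + y2 n) k = pair y1 k + pair y2 k.
Proof.
  intros H1 H2 Hk. unfold pair.
  rewrite (Series_ext _ (fun n => y1 n * k n + y2 n * k n)) by (intro; ring).
  apply Series_plus; apply l1_ex; eapply l1_mul; eauto.
Qed.

Lemma pair_scal c y k : pair (fun n => c * y n) k = c * pair y k.
Proof.
  unfold pair. rewrite <- Series_scal_l. apply Series_ext. intro; ring.
Qed.

Lemma pair_bound y k M : is_l1 y -> (forall n, Rabs (k n) <= M) ->
  Rabs (pair y k) <= M * norm1 y.
Proof.
  intros H Hk. unfold pair. eapply Rle_trans. apply Series_Rabs.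
  eapply l1_mul; eauto. apply norm1_mul; auto.
Qed.

Lemma c0_part a b x Ma Mb : is_l1 x -> (forall n, Rabs (a n) <= Ma) ->
  (forall n, Rabs (b n) <= Mb) -> is_c0 (fun n => kx a b x n - pair x a * b n).
Proof.
  intros Hx Ha Hb. unfold is_c0.
  pose proof (M_ge0 _ _ Ha). pose proof (M_ge0 _ _ Hb).
  assert (Hxa : is_l1 (fun m => x m * a m)) by (eapply l1_mul; eauto).
  assert (Hxb : is_l1 (fun m => x m * b m)) by (eapply l1_mul; eauto).
  apply is_lim_seq_abs_0.
  apply is_lim_seq_le_le with (u := fun _ => 0)
    (w := fun n => Mb * Rabs (sum_n (fun m => x m * a m) n - Series (fun m => x m * a m))
       + Ma * Rabs (Series (fun m => x m * b m) - sum_n (fun m => x m * b m) n)).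
  - intro n. split. apply Rabs_pos. unfold kx, pair.
    replace (b n * sum_n (fun m => x m * a m) n +
      a n * (Series (fun m => x m * b m) - sum_n (fun m => x m * b m) n) -
      Series (fun n0 => x n0 * a n0) * b n)
     with (b n * (sum_n (fun m => x m * a m) n - Series (fun m => x m * a m)) +
      a n * (Series (fun m => x m * b m) - sum_n (fun m => x m * b m) n)) by ring.
    eapply Rle_trans. apply Rabs_triang. rewrite !Rabs_mult.
    apply Rplus_le_compat; apply Rmult_le_compat_r; auto; apply Rabs_pos.
  - apply is_lim_seq_const.
  - replace 0 with (Mb * 0 + Ma * 0) by ring.
    apply is_lim_seq_plus'; apply is_lim_seq_mult'; try apply is_lim_seq_const.
    + apply -> (is_lim_seq_abs_0 (fun n => sum_n (fun m => x m * a m) n - Series (fun m => x m * a m))).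
      replace 0 with (Series (fun m => x m * a m) - Series (fun m => x m * a m)) by ring.
      apply is_lim_seq_minus'. apply ps_lim, Hxa. apply is_lim_seq_const.
    + apply -> (is_lim_seq_abs_0 (fun n => Series (fun m => x m * b m) - sum_n (fun m => x m * b m) n)).
      replace 0 with (Series (fun m => x m * b m) - Series (fun m => x m * b m)) by ring.
      apply is_lim_seq_minus'. apply is_lim_seq_const. apply ps_lim, Hxb.
Qed.

Lemma net_lim_mulr {I : Type} (le : I -> I -> Prop) f l c :
  net_lim le f l -> net_lim le (fun i => f i * c) (l * c).
Proof.
  intros H eps Heps. destruct (Req_dec c 0) as [Hc|Hc].
  - subst. destruct (H eps Heps) as [i0 Hi0]. exists i0. intros i _.
    replace (f i * 0 - l * 0) with 0 by ring. rewrite Rabs_R0. lra.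
  - assert (Hc' : 0 < Rabs c) by (apply Rabs_pos_lt; exact Hc).
    destruct (H (eps / Rabs c)) as [i0 Hi0]. apply Rdiv_lt_0_compat; lra.
    exists i0. intros i Hi. specialize (Hi0 i Hi).
    replace (f i * c - l * c) with ((f i - l) * c) by ring. rewrite Rabs_mult.
    apply (Rmult_lt_compat_r (Rabs c)) in Hi0; auto.
    replace (eps / Rabs c * Rabs c) with eps in Hi0 by (field; lra). exact Hi0.
Qed.

Theorem lemma2p3 (a b : nat -> R) :
  is_linf a -> is_linf b ->
  exists B : (nat -> R) -> (nat -> R) -> R,
    cont_sym_bilinear B /\
    forall z1 z2 : (nat -> R) -> R,
      is_bidual z1 -> in_c0_perp z2 -> AB_ext B z1 z2 (z1 a * z2 b).
Proof.
  intros Ha0 Hb0. destruct Ha0 as [Ma Ha], Hb0 as [Mb Hb].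
  pose proof (M_ge0 _ _ Ha). pose proof (M_ge0 _ _ Hb).
  exists (Bf a b). split.
  - unfold cont_sym_bilinear. split; [|split; [|split; [|split; [|split]]]].
    + intros x1 x2 y H1 H2 Hy.
      rewrite (Bf_sym a b _ y Ma Mb), (Bf_sym a b x1 y Ma Mb), (Bf_sym a b x2 y Ma Mb); auto.
      2: apply l1_plus; auto.
      unfold Bf. eapply pair_plus; eauto. apply (kx_bound a b y Ma Mb); auto.
    + intros c x y Hx Hy.
      rewrite (Bf_sym a b _ y Ma Mb), (Bf_sym a b x y Ma Mb); auto.
      2: apply l1_scal; auto.
      unfold Bf. apply pair_scal.
    + intros x y1 y2 Hx H1 H2. unfold Bf. eapply pair_plus; eauto.
      apply (kx_bound a b x Ma Mb); auto.
    + intros c x y Hx Hy. unfold Bf. apply pair_scal.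
    + intros x y Hx Hy. apply (Bf_sym a b x y Ma Mb); auto.
    + exists (3 * Ma * Mb). intros x y Hx Hy. unfold Bf.
      eapply Rle_trans. apply pair_bound. exact Hy. apply (kx_bound a b x Ma Mb); auto.
      right; ring.
  - intros z1 z2 Hz1 [Hz2 Hz2c]. unfold AB_ext.
    intros I J leI leJ x y dI dJ [Hx Hxl] [Hy Hyl].
    exists (fun i => z2 (kx a b (x i))). split.
    + intro i. unfold Bf. apply Hyl. exists (3 * Ma * Mb * norm1 (x i)).
      apply kx_bound; auto.
    + assert (key : forall i, z2 (kx a b (x i)) = pair (x i) a * z2 b).
      { intro i. set (p := pair (x i) a).
        assert (E : kx a b (x i) = fun n => p * b n + (kx a b (x i) n - p * b n)).
        { apply functional_extensionality. intro n. ring. }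
        destruct Hz2 as [Hadd [Hsc _]].
        rewrite E, Hadd, Hsc, (Hz2c (fun n => kx a b (x i) n - p * b n)).
        - ring.
        - unfold p. eapply c0_part; eauto.
        - exists Mb. exact Hb.
        - exists (Rabs p * Mb). intro n. rewrite Rabs_mult.
          apply Rmult_le_compat_l. apply Rabs_pos. apply Hb.
        - exists (3 * Ma * Mb * norm1 (x i) + Rabs p * Mb). intro n.
          unfold Rminus. eapply Rle_trans. apply Rabs_triang. rewrite Rabs_Ropp, Rabs_mult.
          apply Rplus_le_compat. apply kx_bound; auto.
          apply Rmult_le_compat_l. apply Rabs_pos. apply Hb. }
      replace (fun i => z2 (kx a b (x i))) with (fun i => pair (x i) a * z2 b).
      2: { apply functional_extensionality. intro i. symmetry. apply key. }
      apply net_lim_mulr. apply Hxl. exists Ma. exact Ha.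
Qed.
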